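(* Let $\phi$ be the standard normal density, $\gamma(u)=\frac12e^{-|u|}$ the Laplace density, and $g=\phi*\gamma$. For $\alpha\in[0,1]$ and $x\in\mathbb{R}$, let $a(x)=\frac{\alpha g(x)}{(1-\alpha)\phi(x)+\alpha g(x)}$, $\gamma_x(u)=\phi(x-u)\gamma(u)/g(x)$, and let $\pi_\alpha(\cdot\mid x)=(1-a(x))\delta_0+a(x)\gamma_x(u)\,du$. Set $r_2(\alpha,0,x)=\int u^2\,d\pi_\alpha(u\mid x)$. Then there exists $C_0>0$ such that for all $x\in\mathbb{R}$ and all $\alpha\in[0,1]$, $r_2(\alpha,0,x)\ge C_0\alpha$.
   Context: $\pi_\alpha(\cdot\mid x)$ is the posterior distribution of a single coordinate $\theta$ given observation $x\sim\mathcal{N}(\theta,1)$ under the spike and slab prior $(1-\alpha)\delta_0+\alpha\,\mathrm{Lap}(1)$. *)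

(* Defs.v *)
From HB Require Import structures.
From mathcomp Require Import all_boot all_order all_algebra.
From mathcomp Require Import all_classical all_reals all_analysis.
Set Implicit Arguments. Unset Strict Implicit. Unset Printing Implicit Defensive.
Import Order.TTheory GRing.Theory Num.Theory.
Local Open Scope classical_set_scope.
Local Open Scope ring_scope.

Section Defs.
Variable R : realType.

Definition phi (x : R) : R := expR (- (x ^+ 2) / 2) / Num.sqrt (2 * pi).

Definition gam (u : R) : R := expR (- `|u|) / 2.

Definition g (x : R) : R :=
  Rintegral (@lebesgue_measure R) setT (fun u => phi (x - u) * gam u).

Definition a (alpha x : R) : R :=
  alpha * g x / ((1 - alpha) * phi x + alpha * g x).

Definition gam_x (x u : R) : R := phi (x - u) * gam u / g x.

(* r_2(alpha,0,x) = \int u^2 dpi_alpha(u|x)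
   = (1 - a x) * 0^2 + a x * \int u^2 gamma_x(u) du   (extended-real valued) *)
Definition r2 (alpha x : R) : \bar R :=
  ((1 - a alpha x) * 0 ^+ 2)%:E +
  (a alpha x)%:E * (\int[@lebesgue_measure R]_(u in setT) (u ^+ 2 * gam_x x u)%:E)%E.

End Defs.

(* Main.v *)
Require Import Defs.
From HB Require Import structures.
From mathcomp Require Import all_boot all_order all_algebra.
From mathcomp Require Import all_classical all_reals all_analysis.
From mathcomp Require Import ring lra measurable_realfun.
Set Implicit Arguments. Unset Strict Implicit.
Import Order.TTheory GRing.Theory Num.Theory.
Local Open Scope classical_set_scope.
Local Open Scope ring_scope.

Lemma sq_ge0_aux (R : realType) (v : R) : `|v| ^+ 2 = v ^+ 2.
Proof. by rewrite real_normK ?num_real. Qed.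

Lemma sqrt2pi_gt0 (R : realType) : 0 < Num.sqrt (2 * pi) :> R.
Proof. by rewrite sqrtr_gt0 mulr_gt0 ?pi_gt0. Qed.

Lemma phi_gt0 (R : realType) (v : R) : 0 < phi v.
Proof. by rewrite /phi divr_gt0 ?expR_gt0 ?sqrt2pi_gt0. Qed.

Lemma gam_gt0 (R : realType) (v : R) : 0 < gam v.
Proof. by rewrite /gam divr_gt0 ?expR_gt0. Qed.

Lemma f_ge0 (R : realType) (x u : R) : 0 <= phi (x - u) * gam u.
Proof. by apply: mulr_ge0; apply: ltW; [exact: phi_gt0|exact: gam_gt0]. Qed.

Lemma phi_ub (R : realType) (v : R) :
  phi v <= expR 1 / Num.sqrt (2 * pi) * expR (- `|v|).
Proof.
rewrite /phi mulrAC ler_pM2r ?invr_gt0 ?sqrt2pi_gt0 // -expRD ler_expR.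
have := sq_ge0_aux v; have := normr_ge0 v; move: `|v| => t t0 <-.
nra.
Qed.

Lemma f_ub (R : realType) (x u : R) :
  phi (x - u) * gam u <=
  expR 1 / (2 * Num.sqrt (2 * pi) * normal_peak 2) * expR (- `|x|)
  * normal_pdf x 2 u.
Proof.
have s0 := @sqrt2pi_gt0 R.
have p0 : 0 < normal_peak (2 : R) by rewrite normal_peak_gt0.
rewrite normal_pdfE ?pnatr_eq0 //= /phi /gam /normal_fun.
have -> : expR (- (u - x) ^+ 2 / (2 ^+ 2 *+ 2)) = expR (- (x - u) ^+ 2 / 8) :> R.
  congr expR; rewrite -opprB sqrrN; congr (- _ / _).
  by rewrite -mulr_natr -natrX -natrM.
have h1 : expR (- (x - u) ^+ 2 / 2) <= expR 1 * expR (- (x - u) ^+ 2 / 8) * expR (- `|x - u|) :> R.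
  rewrite -!expRD ler_expR.
  have := sq_ge0_aux (x - u); have := normr_ge0 (x - u); move: `|x - u| => t t0 <-.
  have := sqr_ge0 (t - 4 / 3); nra.
have h2 : expR (- `|x - u|) * expR (- `|u|) <= expR (- `|x|) :> R.
  rewrite -expRD ler_expR lerNr opprD !opprK.
  by have := ler_normD (x - u) u; rewrite subrK.
have e0 : forall y : R, 0 < expR y by move=> y; exact: expR_gt0.
rewrite [X in X <= _](_ : _ = expR (- (x - u) ^+ 2 / 2) * expR (- `|u|) / (2 * Num.sqrt (2 * pi))); last first.
  by rewrite invfM; field; rewrite gt_eqF.
rewrite [X in _ <= X](_ : _ = expR 1 * expR (- (x - u) ^+ 2 / 8) * expR (- `|x|) / (2 * Num.sqrt (2 * pi))); last first.
  by field; rewrite !gt_eqF.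
rewrite ler_pM2r ?invr_gt0 ?mulr_gt0 //.
apply: le_trans (ler_wpM2r (ltW (e0 _)) h1) _.
rewrite -!mulrA ler_wpM2l ?(ltW (e0 _)) // ler_wpM2l ?(ltW (e0 _)) //.
Qed.

Lemma meas_f (R : realType) (x : R) :
  measurable_fun setT (fun u : R => phi (x - u) * gam u).
Proof.
have m1 : measurable_fun setT (fun u : R => x - u).
  by apply: measurable_funB.
have m2 : measurable_fun setT (fun u : R => (x - u) ^+ 2).
  exact: measurable_funX.
have m3 : measurable_fun setT (fun u : R => - (x - u) ^+ 2 / 2).
  apply: measurable_funM => //. exact: (measurableT_comp (@oppr_measurable R setT) m2).
have m4 : measurable_fun setT (fun u : R => expR (- (x - u) ^+ 2 / 2)).
  exact: (measurableT_comp (@measurable_expR R) m3).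
have m5 : measurable_fun setT (fun u : R => phi (x - u)).
  by rewrite /phi; apply: measurable_funM.
have m6 : measurable_fun setT (fun u : R => expR (- `|u|)).
  apply: measurableT_comp; first exact: measurable_expR.
  by apply: measurableT_comp => //; exact: normr_measurable.
have m7 : measurable_fun setT (fun u : R => gam u).
  by rewrite /gam; apply: measurable_funM.
exact: measurable_funM.
Qed.

Lemma itv_meas1 (R : realType) (t : R) :
  lebesgue_measure [set` `[t, t + 1]] = 1%E.
Proof.
rewrite lebesgue_measure_itv /= lte_fin ltrDl ltr01 -EFinD.
by rewrite addrAC subrr add0r.
Qed.

Lemma int_lb (R : realType) (F : R -> R) (t L : R) :
  measurable_fun setT F -> (forall u, 0 <= F u) -> 0 <= L ->
  (forall u, t <= u <= t + 1 -> L <= F u) ->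
  (L%:E <= \int[lebesgue_measure]_(u in setT) (F u)%:E)%E.
Proof.
move=> mF F0 L0 FL.
have mA : measurable [set` `[t, t + 1]] by [].
apply: (@le_trans _ _ (\int[lebesgue_measure]_(u in [set` `[t, (t + 1)%R]]) (F u)%:E)%E).
  apply: (@le_trans _ _ (\int[lebesgue_measure]_(u in [set` `[t, (t + 1)%R]]) (cst L%:E u))%E).
    rewrite integral_cst //; set m := (X in (_ * X)%E); have -> : m = 1%E by exact: itv_meas1.
    by rewrite mule1.
  apply: ge0_le_integral => //.
  all: try (by move=> u _; rewrite lee_fin).
  all: try (by move=> u; rewrite /= in_itv /= => /FL; rewrite lee_fin).
  apply/measurable_EFinP; exact: measurable_funTS.
apply: ge0_subset_integral => //.
- exact/measurable_EFinP.
- by move=> u _; rewrite lee_fin.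
Qed.

Definition Kc (R : realType) : R :=
  expR 1 / (2 * Num.sqrt (2 * pi) * normal_peak 2).
Definition cL (R : realType) : R := expR (-4) / (2 * Num.sqrt (2 * pi)).

Lemma Kc_gt0 (R : realType) : 0 < Kc R.
Proof.
rewrite /Kc divr_gt0 ?expR_gt0 // !mulr_gt0 ?sqrt2pi_gt0 //.
by rewrite normal_peak_gt0.
Qed.

Lemma cL_gt0 (R : realType) : 0 < cL R.
Proof. by rewrite /cL divr_gt0 ?expR_gt0 // !mulr_gt0 ?sqrt2pi_gt0. Qed.

Lemma int_f_ub (R : realType) (x : R) :
  (\int[@lebesgue_measure R]_(u in setT) (phi (x - u) * gam u)%:E
     <= (Kc R * expR (- `|x|))%:E)%E.
Proof.
have mn : measurable_fun setT (normal_pdf x (2 : R)) by exact: measurable_normal_pdf.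
apply: (@le_trans _ _ (\int[@lebesgue_measure R]_(u in setT)
    ((Kc R * expR (- `|x|))%:E * (normal_pdf x 2 u)%:E))%E).
  apply: ge0_le_integral => //.
  - by move=> u _; rewrite lee_fin; exact: f_ge0.
  - by apply/measurable_EFinP; exact: meas_f.
  - apply/measurable_EFinP => /=.
    by apply: measurable_funM.
  - by move=> u _; rewrite -EFinM lee_fin; exact: f_ub.
rewrite ge0_integralZl //.
- by rewrite integral_normal_pdf mule1.
- by apply/measurable_EFinP.
- by move=> u _; rewrite lee_fin normal_pdf_ge0.
- by rewrite lee_fin mulr_ge0 // ltW ?Kc_gt0 ?expR_gt0.
Qed.

Lemma f_lb (R : realType) (x u : R) :
  `|x - u| <= 2 -> `|u| <= `|x| + 2 ->
  cL R * expR (- `|x|) <= phi (x - u) * gam u.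
Proof.
move=> h1 h2.
have s0 := @sqrt2pi_gt0 R.
have e1 : expR (-2) <= expR (- (x - u) ^+ 2 / 2) :> R.
  rewrite ler_expR -sq_ge0_aux.
  have := normr_ge0 (x - u); move: h1; move: `|x - u| => t ht t0.
  have h4 : t ^+ 2 <= 4.
    by rewrite expr2; apply: le_trans (ler_pM t0 t0 ht ht) _; lra.
  move: (t ^+ 2) h4 => w hw; lra.
have e2 : expR (- (`|x| + 2)) <= expR (- `|u|) :> R by rewrite ler_expR lerN2.
rewrite /cL /phi /gam.
rewrite [X in X <= _](_ : _ = expR (-2) * expR (- (`|x| + 2)) / (2 * Num.sqrt (2 * pi))); last first.
  rewrite mulrAC -!expRD; congr (expR _ / _); lra.
rewrite [X in _ <= X](_ : _ = expR (- (x - u) ^+ 2 / 2) * expR (- `|u|) / (2 * Num.sqrt (2 * pi))); last first.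
  by rewrite invfM; field; rewrite gt_eqF.
rewrite ler_pM2r ?invr_gt0 ?mulr_gt0 //.
apply: le_trans (ler_wpM2r (ltW (expR_gt0 _)) e1) _.
by rewrite ler_wpM2l // ltW ?expR_gt0.
Qed.

Lemma itv_cond (R : realType) (x u : R) :
  let t := if 0 <= x then x + 1 else x - 2 in
  t <= u <= t + 1 ->
  [/\ `|x - u| <= 2, 1 <= `|u| & `|u| <= `|x| + 2].
Proof.
move=> t; rewrite /t; case: ifP => hx /andP[h1 h2].
  rewrite (ger0_norm hx) !ler_norml; split.
  - apply/andP; split; lra.
  - by rewrite ler_normr; apply/orP; left; lra.
  - apply/andP; split; lra.
move/negbT: hx; rewrite -ltNge => hx.
rewrite (ltr0_norm hx) !ler_norml; split.
- apply/andP; split; lra.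
- by rewrite ler_normr; apply/orP; right; lra.
- apply/andP; split; lra.
Qed.

Lemma g_props (R : realType) (x : R) :
  [/\ (\int[@lebesgue_measure R]_(u in setT) (phi (x - u) * gam u)%:E)%E = (g x)%:E,
      g x <= Kc R * expR (- `|x|) & cL R * expR (- `|x|) <= g x].
Proof.
set I := (\int[@lebesgue_measure R]_(u in setT) (phi (x - u) * gam u)%:E)%E.
have I0 : (0 <= I)%E.
  by apply: integral_ge0 => u _; rewrite lee_fin; exact: f_ge0.
have Iub : (I <= (Kc R * expR (- `|x|))%:E)%E by exact: int_f_ub.
have Ilb : ((cL R * expR (- `|x|))%:E <= I)%E.
  pose t := if 0 <= x then x + 1 else x - 2.
  apply: (@int_lb R (fun u => phi (x - u) * gam u) t).
  - exact: meas_f.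
  - by move=> u; exact: f_ge0.
  - by rewrite mulr_ge0 // ltW ?cL_gt0 ?expR_gt0.
  - move=> u hu; have [h1 _ h3] := itv_cond hu; exact: f_lb.
have Ifin : I \is a fin_num.
  by rewrite ge0_fin_numE // (le_lt_trans Iub) // ltry.
have IE : I = (g x)%:E by rewrite /g fineK.
split => //.
- by rewrite -lee_fin -IE.
- by rewrite -lee_fin -IE.
Qed.

Theorem lemma2 (R : realType) :
  exists C0 : R, 0 < C0 /\
    forall (x alpha : R), 0 <= alpha <= 1 ->
      ((C0 * alpha)%:E <= r2 alpha x)%E.
Proof.
set M : R := expR 1 / Num.sqrt (2 * pi) + Kc R.
have s0 := @sqrt2pi_gt0 R.
have M0 : 0 < M by rewrite addr_gt0 ?Kc_gt0 // divr_gt0 ?expR_gt0.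
have c0 := @cL_gt0 R.
exists (cL R / M); split; first by rewrite divr_gt0.
move=> x alpha /andP[a0 a1].
have [IE gub glb] := g_props x.
set E := expR (- `|x|).
have E0 : 0 < E by rewrite expR_gt0.
set G := g x.
have G0 : 0 < G by apply: lt_le_trans glb; rewrite mulr_gt0.
set P := phi x.
have p0 : 0 < P by exact: phi_gt0.
have pub : P <= expR 1 / Num.sqrt (2 * pi) * E by exact: phi_ub.
set D := (1 - alpha) * P + alpha * G.
have D0 : 0 < D.
  rewrite /D; have [hGP|hGP] := lerP P G.
    have h : 0 <= alpha * (G - P) by apply: mulr_ge0; lra.
    have -> : (1 - alpha) * P + alpha * G = P + alpha * (G - P) by ring.
    by apply: lt_le_trans p0 _; rewrite lerDl.
  have h : 0 <= (1 - alpha) * (P - G) by apply: mulr_ge0; lra.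
  have -> : (1 - alpha) * P + alpha * G = G + (1 - alpha) * (P - G) by ring.
  by apply: lt_le_trans G0 _; rewrite lerDl.
have DM : D <= M * E.
  have h1 : 0 <= alpha * P by apply: mulr_ge0; lra.
  have h2 : 0 <= (1 - alpha) * G by apply: mulr_ge0; lra.
  have h3 : D <= P + G by rewrite /D; lra.
  apply: le_trans h3 _; rewrite /M mulrDl; apply: lerD => //.
set L := cL R * E / G.
have Ilb : (L%:E <= \int[@lebesgue_measure R]_(u in setT) (u ^+ 2 * gam_x x u)%:E)%E.
  pose t := if 0 <= x then x + 1 else x - 2.
  apply: (@int_lb R (fun u => u ^+ 2 * gam_x x u) t).
  - apply: measurable_funM; first exact: measurable_funX.
    rewrite /gam_x; apply: measurable_funM => //; exact: meas_f.
  - by move=> u; rewrite /gam_x mulr_ge0 ?sqr_ge0 // divr_ge0 ?(ltW G0) ?f_ge0.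
  - by rewrite /L divr_ge0 ?(ltW G0) // mulr_ge0 // ltW.
  - move=> u hu; have [h1 h2 h3] := itv_cond hu.
    have fl := f_lb h1 h3.
    have u1 : 1 <= u ^+ 2.
      by rewrite -sq_ge0_aux expr2 -[1]mulr1 ler_pM.
    rewrite /L /gam_x -/G mulrA ler_pM2r ?invr_gt0 //.
    have f0 : 0 <= phi (x - u) * gam u by exact: f_ge0.
    apply: le_trans fl _; rewrite ler_peMl //.
have a_ge0 : 0 <= a alpha x by rewrite /a -/G -/P -/D divr_ge0 ?(ltW D0) // mulr_ge0 // ltW.
rewrite /r2 expr0n /= mulr0 add0e.
apply: le_trans (lee_wpmul2l _ Ilb); last by rewrite lee_fin.
rewrite -EFinM lee_fin /a -/G -/P -/D /L.
have -> : alpha * G / D * (cL R * E / G) = alpha * (cL R * E / D).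
  by field; rewrite !gt_eqF.
rewrite mulrC ler_wpM2l //.
have -> : cL R / M = cL R * E / (M * E) by field; rewrite !gt_eqF.
rewrite ler_pM2l ?mulr_gt0 //; last by rewrite invr_gt0 mulr_gt0.
rewrite lef_pV2 // posrE ?mulr_gt0 //.
Qed.
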